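(* Let $W$ be a finite nonempty subset of $\mathbb{Z}$ with $\gcd(W)=1$. There is an algorithm running in time polynomial in the size of the binary encoding of $W$ that outputs two $W$-reachable integers $p,q$ that are mutually prime, i.e. $\gcd(p,q)=1$.
   Context: An integer $z$ is $W$-reachable if $z\in\langle W\rangle_{\mathbb{N}}=\{\sum_{w\in W}k_w w\mid k_w\in\mathbb{N}\}$, i.e. $z$ is a linear combination of elements of $W$ with nonnegative integer coefficients. *)

(* Defs.v *)
From mathcomp Require Import all_boot all_order all_algebra.
Set Implicit Arguments.
Unset Strict Implicit.
Unset Printing Implicit Defensive.
Import Order.TTheory GRing.Theory Num.Theory.
Local Open Scope ring_scope.

(* W-reachability and gcd of a finite set W of integers, given as a   *)
(* duplicate-free list.                                                *)

Definition reachable (W : seq int) (z : int) : Prop :=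
  exists k : int -> nat, z = \sum_(w <- W) (k w)%:Z * w.

Definition gcd_seq (W : seq int) : int := foldr gcdz 0 W.

(* Model of computation: a RAM with integer registers, indirect        *)
(* addressing, arithmetic (+,-,*,div,mod) and conditional jumps, under *)
(* the logarithmic cost model (each step costs 1 + the bit lengths of  *)
(* all the integers it touches).  Polynomial time in this model is     *)
(* polynomially equivalent to polynomial time on Turing machines.      *)

Definition bitlen (z : int) : nat := (trunc_log 2 `|z|%N).+1.

Inductive instr : Type :=
| IConst of nat & int
| IAdd of nat & nat & nat
| ISub of nat & nat & nat
| IMul of nat & nat & nat
| IDiv of nat & nat & nat      (* r := a div b (0 if b = 0) *)
| IMod of nat & nat & nat
| ILoad of nat & nat           (* r := M[ |M[a]| ] *)
| IStore of nat & nat          (* M[ |M[a]| ] := M[r] *)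
| IJlez of nat & nat
| IHalt.

Definition memory := nat -> int.

Definition upd (m : memory) (r : nat) (v : int) : memory :=
  fun i => if i == r then v else m i.

Definition exec (i : instr) (pc : nat) (m : memory) : nat * memory * nat :=
  match i with
  | IConst r c => (pc.+1, upd m r c, (bitlen c).+1)
  | IAdd r a b => (pc.+1, upd m r (m a + m b),
                   (bitlen (m a) + bitlen (m b) + bitlen (m a + m b)).+1)
  | ISub r a b => (pc.+1, upd m r (m a - m b),
                   (bitlen (m a) + bitlen (m b) + bitlen (m a - m b)).+1)
  | IMul r a b => (pc.+1, upd m r (m a * m b),
                   (bitlen (m a) + bitlen (m b) + bitlen (m a * m b)).+1)
  | IDiv r a b => (pc.+1, upd m r (m a %/ m b)%Z,
                   (bitlen (m a) + bitlen (m b) + bitlen (m a %/ m b)%Z).+1)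
  | IMod r a b => (pc.+1, upd m r (m a %% m b)%Z,
                   (bitlen (m a) + bitlen (m b) + bitlen (m a %% m b)%Z).+1)
  | ILoad r a => (pc.+1, upd m r (m `|m a|%N),
                  (bitlen (m a) + bitlen (m `|m a|%N)).+1)
  | IStore a r => (pc.+1, upd m `|m a|%N (m r),
                   (bitlen (m a) + bitlen (m r)).+1)
  | IJlez r l => ((if m r <= 0 then l else pc.+1), m, (bitlen (m r)).+1)
  | IHalt => (pc, m, 0%N)
  end.

(* run the program P from pc with memory m, using at most [fuel] steps;
   returns the final memory and the total cost if it halts (reaches an
   IHalt instruction or a pc outside the program). *)
Fixpoint run (P : seq instr) (fuel : nat) (pc : nat) (m : memory)
  : option (memory * nat) :=
  match fuel with
  | 0 => None
  | f.+1 =>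
    match nth IHalt P pc with
    | IHalt => Some (m, 0%N)
    | i => let: (pc', m', c) := exec i pc m in
           match run P f pc' m' with
           | Some (m'', t) => Some (m'', (t + c)%N)
           | None => None
           end
    end
  end.

(* input encoding: M[0] = |W|, M[1..|W|] = the elements of W, 0 elsewhere *)
Definition init_mem (W : seq int) : memory :=
  fun i => if i == 0%N then (size W)%:Z
           else if (i <= size W)%N then nth 0 W i.-1 else 0.

(* size of the binary encoding of W *)
Definition input_size (W : seq int) : nat :=
  (\sum_(w <- W) (bitlen w).+1)%N.

(* Main.v *)
Require Import Defs.
From mathcomp Require Import all_boot all_order all_algebra.
From mathcomp Require Import zify ring lra.
Import Order.TTheory GRing.Theory Num.Theory.
Local Open Scope ring_scope.

Definition posp (w : int) : int := if w <= 0 then 0 else w.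

Lemma bezout_seq (W : seq int) : uniq W ->
  exists c : int -> int, \sum_(w <- W) c w * w = gcd_seq W.
Proof.
elim: W => [|w W IH] /=; first by exists (fun _ => 0); rewrite big_nil.
case/andP=> wW /IH [c Hc].
case: (Bezoutz w (gcd_seq W)) => u [v Huv].
exists (fun x => if x == w then u else v * c x).
rewrite big_cons eqxx -Huv -Hc mulr_sumr; congr (_ + _).
rewrite !big_seq; apply: eq_bigr => x xW.
have -> : (x == w) = false by apply/negbTE; apply: contraNneq wW => <-.
by rewrite mulrA.
Qed.

Lemma posp_ge0 w : 0 <= posp w.
Proof. by rewrite /posp; case: ifP => // /negbT; rewrite -ltNge => /ltW. Qed.

Lemma key_pos (W : seq int) : uniq W -> gcd_seq W = 1 ->
  0 < \sum_(w <- W) posp w ->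
  reachable W ((\sum_(w <- W) posp w) * (\sum_(w <- W) posp w)) /\
  reachable W ((\sum_(w <- W) posp w) * (\sum_(w <- W) posp w) + 1).
Proof.
set P := \sum_(w <- W) posp w => uW g1 P0.
have P00 : P != 0 by rewrite gt_eqF.
split.
  exists (fun w : int => `|(if (w <= 0)%R then 0%R else P)|%N).
  rewrite /P mulr_sumr; apply: eq_bigr => w _.
  rewrite /posp; case: ifP => _; first by rewrite mulr0 mul0r.
  by rewrite gez0_abs ?ltW // mulrC.
have [c Hc] := bezout_seq _ uW; rewrite g1 in Hc.
pose d w := (c w %% P)%Z; pose e w := (c w %/ P)%Z.
pose X := \sum_(w <- W) d w * w; pose E := \sum_(w <- W) e w * w.
have H1 : 1 = P * E + X.
  rewrite -Hc /X /E mulr_sumr -big_split /=; apply: eq_bigr => w _.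
  by rewrite {1}(divz_eq (c w) P) /d /e; ring.
have dge0 w : 0 <= d w by apply: modz_ge0.
have dlt w : d w < P by apply: ltz_pmod.
have HX : X <= (P - 1) * P.
  rewrite /X /P mulr_sumr; apply: ler_sum => w _.
  rewrite /posp; case: ifP => w0.
    by rewrite mulr0 mulr_ge0_le0.
  apply: ler_wpM2r; first by apply: ltW; rewrite ltNge w0.
  by rewrite -ltzD1 subrK dlt.
have h : P * (- E) < P * (P - 1).
  have -> : P * (- E) = X - 1.
    by rewrite [in RHS]H1; ring.
  have -> : P * (P - 1) = (P - 1) * P by ring.
  have := HX; lra.
have HPE : 0 <= P + E by move: h; rewrite ltr_pM2l //; lia.
exists (fun w : int => `|(d w + (if (w <= 0)%R then 0%R else P + E))%R|%N).
transitivity (X + (P + E) * P); first by rewrite H1; ring.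
rewrite /X /P mulr_sumr -big_split /=; apply: eq_bigr => w _.
rewrite gez0_abs; last by apply: addr_ge0 => //; case: ifP.
rewrite /posp; case: ifP => _; ring.
Qed.

Lemma posp_le_sum (W : seq int) x : x \in W -> posp x <= \sum_(w <- W) posp w.
Proof.
elim: W => //= w W IH; rewrite in_cons big_cons => /orP [/eqP <-|xW].
  by rewrite lerDl; apply: sumr_ge0 => *; apply: posp_ge0.
by apply: le_trans (IH xW) _; rewrite lerDr posp_ge0.
Qed.

Lemma gcd_seq_opp (W : seq int) : gcd_seq (map -%R W) = gcd_seq W.
Proof. by elim: W => //= w W ->; rewrite gcdNz. Qed.

Lemma reach_opp (W : seq int) z : reachable (map -%R W) z -> reachable W (- z).
Proof.
case=> k ->; exists (fun w => k (- w)).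
rewrite big_map -sumrN; apply: eq_bigr => w _; by rewrite mulrN opprK.
Qed.

Lemma all0_gcd (W : seq int) : (forall w, w \in W -> w = 0) -> gcd_seq W = 0.
Proof.
elim: W => //= w W IH H.
rewrite (H w (mem_head _ _)) IH // => x xW; apply: H; by rewrite in_cons xW orbT.
Qed.

Lemma sum_le_elt (W : seq int) x : (forall w, w \in W -> w <= 0) -> x \in W ->
  \sum_(w <- W) w <= x.
Proof.
elim: W => //= w W IH H; rewrite in_cons big_cons => /orP [/eqP <-|xW].
  rewrite gerDl big_seq; apply: sumr_le0 => i iW; apply: H; by rewrite in_cons iW orbT.
have Hw : w <= 0 by apply: H; exact: mem_head.
apply: le_trans (IH _ xW); last by move=> i iW; apply: H; rewrite in_cons iW orbT.
by rewrite gerDr.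
Qed.

Lemma key_neg (W : seq int) : uniq W -> gcd_seq W = 1 ->
  \sum_(w <- W) posp w <= 0 ->
  reachable W (0 - (\sum_(w <- W) w) * (\sum_(w <- W) w)) /\
  reachable W (0 - (\sum_(w <- W) w) * (\sum_(w <- W) w) - 1).
Proof.
move=> uW g1 P0.
have neg w : w \in W -> w <= 0.
  move=> wW; have := le_trans (posp_le_sum _ _ wW) P0.
  by rewrite /posp; case: ifP => // /negbT; rewrite -ltNge => /lt_le_trans h /h; rewrite ltxx.
set S := \sum_(w <- W) w.
have S0 : S < 0.
  have Sle : S <= 0 by rewrite /S big_seq; apply: sumr_le0 => i; exact: neg.
  rewrite lt_neqAle Sle andbT; apply/eqP => S0.
  have : gcd_seq W = 0.
    apply: all0_gcd => w wW; apply/eqP; rewrite eq_le neg //=.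
    by rewrite -S0 sum_le_elt.
  by rewrite g1.
have uW' : uniq (map -%R W) by rewrite map_inj_uniq //; exact: oppr_inj.
have g1' : gcd_seq (map -%R W) = 1 by rewrite gcd_seq_opp.
have HP : \sum_(w <- map -%R W) posp w = - S.
  rewrite big_map /S -sumrN big_seq [RHS]big_seq; apply: eq_bigr => w wW.
  rewrite /posp; case: ifP => // h; apply/eqP; rewrite eq_sym oppr_eq0 eq_le neg //=.
  by rewrite -oppr_le0.
have [h1 h2] : reachable (map -%R W) ((- S) * (- S)) /\ reachable (map -%R W) ((- S) * (- S) + 1).
  by rewrite -HP; apply: key_pos => //; rewrite HP oppr_gt0.
split.
  have := reach_opp _ _ h1; by rewrite mulrNN sub0r.
have := reach_opp _ _ h2; by rewrite mulrNN sub0r opprD.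
Qed.


Definition prog : seq instr :=
 [:: IAdd 0 0 0; IAdd 0 0 0; IAdd 0 0 0; IAdd 0 0 0;
     IStore 0 1; IConst 1 1; IAdd 0 0 1; IStore 0 2; IAdd 0 0 1; IStore 0 3;
     IAdd 0 0 1; IStore 0 4; IAdd 0 0 1; IStore 0 5; IAdd 0 0 1; IStore 0 6;
     IAdd 0 0 1; IConst 2 7; IConst 3 0; IConst 4 0;
  (* 20 *) ISub 6 0 2; IJlez 6 29; ILoad 5 2; IAdd 4 4 5; IAdd 2 2 1;
  IJlez 5 20; IAdd 3 3 5; ISub 5 5 5; IJlez 5 20;
  (* 29 *) IJlez 3 33; IMul 0 3 3; IAdd 1 0 1; IHalt;
  (* 33 *) IMul 4 4 4; IConst 5 0; ISub 0 5 4; ISub 1 0 1; IHalt].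

Inductive steps (Q : nat) : nat -> memory -> nat -> memory -> nat -> Prop :=
| steps0 pc m : steps Q pc m pc m 0
| stepsS pc m pc' m' c pc'' m'' k :
    nth IHalt prog pc <> IHalt -> exec (nth IHalt prog pc) pc m = (pc', m', c) ->
    (c <= Q)%N -> steps Q pc' m' pc'' m'' k -> steps Q pc m pc'' m'' k.+1.

Lemma run_step P f pc m i pc' m' c : nth IHalt P pc = i -> i <> IHalt ->
  exec i pc m = (pc', m', c) ->
  run P f.+1 pc m = match run P f pc' m' with
                    | Some (m'', t) => Some (m'', (t + c)%N) | None => None end.
Proof.
move=> Hi Hne Hex; rewrite /= Hi.
by destruct i; try congruence; simpl in Hex |- *; case: Hex => <- <- <-.
Qed.

Lemma run_steps Q pc m pc' m' k : steps Q pc m pc' m' k ->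
  nth IHalt prog pc' = IHalt ->
  exists t, run prog k.+1 pc m = Some (m', t) /\ (t <= k * Q)%N.
Proof.
elim=> [pc0 m0|pc0 m0 pc1 m1 c pc2 m2 k0 Hne Hex Hc _ IH] H.
  by exists 0%N; rewrite /= H.
have [t [Ht Htk]] := IH H.
exists (t + c)%N; split.
  by rewrite (run_step prog k0.+1 pc0 m0 _ _ _ _ (erefl _) Hne Hex) Ht.
by rewrite mulSn addnC leq_add.
Qed.

Lemma steps_trans Q a ma b mb c mc k1 k2 :
  steps Q a ma b mb k1 -> steps Q b mb c mc k2 -> steps Q a ma c mc (k1 + k2).
Proof.
elim=> // pc0 m0 pc1 m1 c0 pc2 m2 k0 Hne Hex Hc _ IH H.
rewrite addSn; apply: stepsS Hne Hex Hc (IH H).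
Qed.


Lemma stepsJ Q pc m r l b pc'' m'' k : nth IHalt prog pc = IJlez r l ->
  (m r <= 0) = b -> ((bitlen (m r)).+1 <= Q)%N ->
  steps Q (if b then l else pc.+1) m pc'' m'' k -> steps Q pc m pc'' m'' k.+1.
Proof.
move=> Hi Hb Hc H; apply: stepsS H; first by rewrite Hi.
  by rewrite Hi /= Hb.
by [].
Qed.

Definition Inv (D : nat -> int) (E : nat) (m : memory) (j : nat) : Prop :=
 m 0%N = E%:Z /\ m 1%N = 1 /\ m 2%N = j%:Z /\
     m 3%N = \sum_(7 <= a < j) posp (D a) /\ m 4%N = \sum_(7 <= a < j) D a
   /\ forall a, (7 <= a)%N -> m a = D a.

Lemma cost3 BL Q x y z : ((3*BL).+1 <= Q)%N -> (bitlen x <= BL)%N ->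
  (bitlen y <= BL)%N -> (bitlen z <= BL)%N ->
  ((bitlen x + bitlen y + bitlen z).+1 <= Q)%N.
Proof. lia. Qed.
Lemma cost2 BL Q x y : ((3*BL).+1 <= Q)%N -> (bitlen x <= BL)%N ->
  (bitlen y <= BL)%N -> ((bitlen x + bitlen y).+1 <= Q)%N.
Proof. lia. Qed.
Lemma cost1 BL Q x : ((3*BL).+1 <= Q)%N -> (bitlen x <= BL)%N ->
  ((bitlen x).+1 <= Q)%N.
Proof. lia. Qed.

Lemma psum_le (D : nat -> int) j E : (7 <= j <= E)%N ->
  \sum_(7 <= a < j) `|D a| <= \sum_(7 <= a < E) `|D a|.
Proof.
case/andP=> h1 h2; rewrite (big_cat_nat h1 h2) /= lerDl.
by apply: sumr_ge0.
Qed.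

Lemma posp_norm x : `|posp x| <= `|x|.
Proof. by rewrite /posp; case: ifP. Qed.

Lemma sum_bound (D : nat -> int) j E : (7 <= j <= E)%N ->
  `|\sum_(7 <= a < j) D a| <= \sum_(7 <= a < E) `|D a| /\
  `|\sum_(7 <= a < j) posp (D a)| <= \sum_(7 <= a < E) `|D a|.
Proof.
move=> hj; split; apply: le_trans (psum_le _ _ _ hj).
  exact: ler_norm_sum.
apply: le_trans (ler_norm_sum _ _ _) _; apply: ler_sum => a _; exact: posp_norm.
Qed.

Lemma elt_bound (D : nat -> int) j E : (7 <= j < E)%N ->
  `|D j| <= \sum_(7 <= a < E) `|D a|.
Proof.
case/andP=> h1 h2.
rewrite (big_cat_nat h1 (ltnW h2)) /= [\sum_(j <= i < E) _]big_ltn //=.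
have s1 : 0 <= \sum_(7 <= a < j) `|D a| by apply: sumr_ge0.
have s2 : 0 <= \sum_(j.+1 <= a < E) `|D a| by apply: sumr_ge0.
lra.
Qed.

Lemma upd_hi (m : memory) r v a : (r < 7)%N -> (7 <= a)%N -> upd m r v a = m a.
Proof. by move=> hr ha; rewrite /upd ifN //; apply/eqP; lia. Qed.

Lemma iter D E V BL Q m j : ((3*BL).+1 <= Q)%N ->
  (forall z : int, `|z| <= V%:Z -> (bitlen z <= BL)%N) ->
  \sum_(7 <= a < E) `|D a| + E%:Z <= V%:Z ->
  (7 <= j < E)%N -> Inv D E m j ->
  exists m'' k, steps Q 20 m 20 m'' k /\ (k <= 9)%N /\ Inv D E m'' j.+1.
Proof.
move=> HQ HV HB /andP[j7 jE] [H0 [H1 [H2 [H3 [H4 HD]]]]].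
have hj r : (r < 7)%N -> (j == r) = false by move=> hr; apply/eqP; lia.
have r1 : (7 <= j <= E)%N by lia.
have r2 : (7 <= j.+1 <= E)%N by lia.
have r3 : (7 <= j < E)%N by lia.
have [bS bP] := sum_bound D j E r1.
have [bS' bP'] := sum_bound D j.+1 E r2.
have bD := elt_bound D j E r3.
have T0 : 0 <= \sum_(7 <= a < E) `|D a| by apply: sumr_ge0.
have Sr : \sum_(7 <= a < j.+1) D a = \sum_(7 <= a < j) D a + D j by rewrite big_nat_recr.
have Pr : \sum_(7 <= a < j.+1) posp (D a) = \sum_(7 <= a < j) posp (D a) + posp (D j)
  by rewrite big_nat_recr.
have bE : `|E%:Z| <= V%:Z by rewrite ger0_norm //; lra.
have jE2 : j%:Z <= E%:Z by rewrite lez_nat ltnW.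
have bj : `|j%:Z| <= V%:Z by rewrite ger0_norm //; lra.
have bEj : `|E%:Z - j%:Z| <= V%:Z.
  rewrite ger0_norm; last by rewrite subr_ge0 lez_nat ltnW.
  have : 0 <= j%:Z by [].
  lra.
have E0 : 0 <= E%:Z by [].
have bj1 : `|j%:Z + 1| <= V%:Z.
  have jE3 : j%:Z + 1 <= E%:Z by rewrite -[1]/(1%:Z) -PoszD lez_nat addn1.
  by rewrite ger0_norm; [lra | rewrite addr_ge0].
have b0 : `|0 : int| <= V%:Z by rewrite normr0; lra.
have E7 : 7%:Z <= E%:Z by rewrite lez_nat; lia.
have b1 : `|1 : int| <= V%:Z by rewrite normr1; lra.
case: (boolP (D j <= 0)) => hx.
- eexists; exists 6%N; split; last split => //.
  eapply stepsS; [by [] | reflexivity | | ].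
    rewrite H0 H2; apply: cost3 HQ _ _ _; exact: HV.
  eapply (stepsJ _ _ _ _ _ false); [reflexivity | | | ].
      rewrite /upd /= H0 H2; apply/negbTE; rewrite -ltNge subr_gt0 ltz_nat //.
    rewrite /upd /= H0 H2; apply: cost1 HQ _; exact: HV.
  eapply stepsS; [by [] | reflexivity | | ].
    rewrite /upd /= H2 /= hj // (HD j) //; apply: cost2 HQ _ _; apply: HV => //; lra.
  eapply stepsS; [by [] | reflexivity | | ].
    rewrite /upd /= H2 /= hj // H4 (HD j) // -Sr; apply: cost3 HQ _ _ _; apply: HV => //; lra.
  eapply stepsS; [by [] | reflexivity | | ].
    rewrite /upd /= H2 H1; apply: cost3 HQ _ _ _; apply: HV => //.
  eapply (stepsJ _ _ _ _ _ true); [reflexivity | | | ].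
      by rewrite /upd /= H2 /= hj // (HD j).
    rewrite /upd /= H2 /= hj // (HD j) //; apply: cost1 HQ _; apply: HV; lra.
  apply: steps0.
  split; first by rewrite /upd /=.
  split; first by rewrite /upd /=.
  split; first by rewrite /upd /= H2 H1 -[1]/(1%:Z) -PoszD addn1.
  split; first by rewrite /upd /= H3 Pr (_ : posp (D j) = 0) ?addr0 // /posp hx.
  split; first by rewrite /upd /= H2 /= hj // H4 (HD j) // Sr.
  by move=> a ha; rewrite !upd_hi //; exact: HD.
- have pj : posp (D j) = D j by rewrite /posp (negbTE hx).
  eexists; exists 9%N; split; last split => //.
  eapply stepsS; [by [] | reflexivity | | ].
    rewrite H0 H2; apply: cost3 HQ _ _ _; exact: HV.
  eapply (stepsJ _ _ _ _ _ false); [reflexivity | | | ].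
      rewrite /upd /= H0 H2; apply/negbTE; rewrite -ltNge subr_gt0 ltz_nat //.
    rewrite /upd /= H0 H2; apply: cost1 HQ _; exact: HV.
  eapply stepsS; [by [] | reflexivity | | ].
    rewrite /upd /= H2 /= hj // (HD j) //; apply: cost2 HQ _ _; apply: HV => //; lra.
  eapply stepsS; [by [] | reflexivity | | ].
    rewrite /upd /= H2 /= hj // H4 (HD j) // -Sr; apply: cost3 HQ _ _ _; apply: HV => //; lra.
  eapply stepsS; [by [] | reflexivity | | ].
    rewrite /upd /= H2 H1; apply: cost3 HQ _ _ _; apply: HV => //.
  eapply (stepsJ _ _ _ _ _ false); [reflexivity | | | ].
      by rewrite /upd /= H2 /= hj // (HD j) // (negbTE hx).
    rewrite /upd /= H2 /= hj // (HD j) //; apply: cost1 HQ _; apply: HV; lra.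
  eapply stepsS; [by [] | reflexivity | | ].
    rewrite /upd /= H2 /= hj // H3 (HD j) // -pj -Pr; apply: cost3 HQ _ _ _; apply: HV => //; rewrite ?pj; lra.
  eapply stepsS; [by [] | reflexivity | | ].
    rewrite /upd /= H2 /= hj // (HD j) // subrr; apply: cost3 HQ _ _ _; apply: HV => //; lra.
  eapply (stepsJ _ _ _ _ _ true); [reflexivity | | | ].
      by rewrite /upd /= H2 /= hj // (HD j) // subrr.
    rewrite /upd /= H2 /= hj // (HD j) // subrr; apply: cost1 HQ _; apply: HV; lra.
  apply: steps0.
  split; first by rewrite /upd /=.
  split; first by rewrite /upd /=.
  split; first by rewrite /upd /= H2 H1 -[1]/(1%:Z) -PoszD addn1.
  split; first by rewrite /upd /= H2 /= hj // H3 (HD j) // Pr pj.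
  split; first by rewrite /upd /= H2 /= hj // H4 (HD j) // Sr.
  by move=> a ha; rewrite !upd_hi //; exact: HD.
Qed.

Lemma Inv_upd D E m j r v : (4 < r < 7)%N -> Inv D E m j -> Inv D E (upd m r v) j.
Proof.
move=> hr [H0 [H1 [H2 [H3 [H4 HD]]]]].
have ne k : (k < 5)%N -> (k == r) = false by move=> hk; apply/eqP; lia.
rewrite /Inv /upd !ne //; do 5!split => //.
move=> a ha; rewrite ifN ?HD //; apply/eqP; lia.
Qed.

Lemma loop D E V BL Q : ((3*BL).+1 <= Q)%N ->
  (forall z : int, `|z| <= V%:Z -> (bitlen z <= BL)%N) ->
  \sum_(7 <= a < E) `|D a| + E%:Z <= V%:Z ->
  forall d j m, (E - j = d)%N -> (7 <= j <= E)%N -> Inv D E m j ->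
  exists m' k, steps Q 20 m 29 m' k /\ (k <= 9 * d + 2)%N /\ Inv D E m' E.
Proof.
move=> HQ HV HB; elim=> [|d IH] j m Hd Hj HI.
  have jE : j = E by lia.
  subst j.
  have [H0 [H1 [H2 _]]] := HI.
  have T0 : 0 <= \sum_(7 <= a < E) `|D a| by apply: sumr_ge0.
  have E0 : 0 <= E%:Z by [].
  have bE : `|E%:Z| <= V%:Z by rewrite ger0_norm //; lra.
  eexists; exists 2%N; split; last split => //.
    eapply stepsS; [by [] | reflexivity | | ].
      rewrite H0 H2; apply: cost3 HQ _ _ _; apply: HV => //; rewrite subrr normr0; lra.
    eapply (stepsJ _ _ _ _ _ true); [reflexivity | | | ].
        by rewrite /upd /= H0 H2 subrr.
      rewrite /upd /= H0 H2 subrr; apply: cost1 HQ _; apply: HV; rewrite normr0; lra.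
    apply: steps0.
  by apply: Inv_upd.
have jE : (7 <= j < E)%N by lia.
have [m1 [k1 [S1 [K1 I1]]]] := iter D E V BL Q m j HQ HV HB jE HI.
have e1 : (E - j.+1 = d)%N by lia.
have e2 : (7 <= j.+1 <= E)%N by lia.
have [m2 [k2 [S2 [K2 I2]]]] := IH j.+1 m1 e1 e2 I1.
exists m2, (k1 + k2)%N; split; first exact: steps_trans S1 S2.
split => //; lia.
Qed.

Lemma exitp D E V BL Q m : ((3*BL).+1 <= Q)%N ->
  (forall z : int, `|z| <= V%:Z -> (bitlen z <= BL)%N) ->
  (7 <= E)%N ->
  (\sum_(7 <= a < E) `|D a|) * (\sum_(7 <= a < E) `|D a|) + 1 <= V%:Z ->
  Inv D E m E ->
  exists pcH mf k, steps Q 29 m pcH mf k /\ (k <= 5)%N /\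
    nth IHalt prog pcH = IHalt /\
    (0 < \sum_(7 <= a < E) posp (D a) ->
       mf 0%N = (\sum_(7 <= a < E) posp (D a)) * (\sum_(7 <= a < E) posp (D a)) /\
       mf 1%N = (\sum_(7 <= a < E) posp (D a)) * (\sum_(7 <= a < E) posp (D a)) + 1) /\
    (\sum_(7 <= a < E) posp (D a) <= 0 ->
       mf 0%N = 0 - (\sum_(7 <= a < E) D a) * (\sum_(7 <= a < E) D a) /\
       mf 1%N = 0 - (\sum_(7 <= a < E) D a) * (\sum_(7 <= a < E) D a) - 1).
Proof.
move=> HQ HV E7 HV2 [H0 [H1 [H2 [H3 [H4 HD]]]]].
have hE : (7 <= E <= E)%N by rewrite E7 leqnn.
have [bS bP] := sum_bound D E E hE.
set T := \sum_(7 <= a < E) `|D a| in bS bP HV2.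
set P := \sum_(7 <= a < E) posp (D a) in bP H3 *.
set S := \sum_(7 <= a < E) D a in bS H4 *.
have T0 : 0 <= T by apply: sumr_ge0.
have nP := normr_ge0 P; have nS := normr_ge0 S.
have TT : T <= T * T + 1 by have := sqr_ge0 (T - 1); rewrite expr2; nra.
have bP1 : `|P| <= V%:Z by lra.
have bS1 : `|S| <= V%:Z by lra.
have bPP : `|P * P| <= V%:Z by rewrite normrM; nra.
have bSS : `|S * S| <= V%:Z by rewrite normrM; nra.
have bPP1 : `|P * P + 1| <= V%:Z.
  have h : 0 <= P * P by rewrite -expr2 sqr_ge0.
  rewrite ger0_norm ?addr_ge0 //.
  have -> : P * P = `|P| * `|P| by rewrite -normrM ger0_norm.
  nra.
have bSS1 : `|0 - S * S - 1| <= V%:Z.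
  rewrite sub0r -opprD normrN ger0_norm; last by rewrite addr_ge0 // -expr2 sqr_ge0.
  rewrite -[S * S]ger0_norm ?normrM; last by rewrite -expr2 sqr_ge0.
  nra.
have b0 : `|0 : int| <= V%:Z by rewrite normr0; nra.
have bSSn : `|0 - S * S| <= V%:Z by rewrite sub0r normrN.
have b1 : `|1 : int| <= V%:Z by rewrite normr1; nra.
case: (boolP (P <= 0)) => hP.
- exists 37%N; eexists; exists 5%N; split; last split => //.
    eapply (stepsJ _ _ _ _ _ true); [reflexivity | by rewrite H3 | | ].
      by rewrite H3; apply: cost1 HQ _; apply: HV.
    eapply stepsS; [by [] | reflexivity | | ].
      by rewrite H4; apply: cost3 HQ _ _ _; apply: HV.
    eapply stepsS; [by [] | reflexivity | | ].
      by apply: cost1 HQ _; apply: HV.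
    eapply stepsS; [by [] | reflexivity | | ].
      by rewrite /upd /= H4; apply: cost3 HQ _ _ _; apply: HV.
    eapply stepsS; [by [] | reflexivity | | ].
      by rewrite /upd /= H4 H1; apply: cost3 HQ _ _ _; apply: HV.
    apply: steps0.
  split => //; split; first by rewrite ltNge hP.
  by move=> _; rewrite /upd /= H4 H1.
- exists 32%N; eexists; exists 3%N; split; last split => //.
    eapply (stepsJ _ _ _ _ _ false); [reflexivity | by rewrite H3 (negbTE hP) | | ].
      by rewrite H3; apply: cost1 HQ _; apply: HV.
    eapply stepsS; [by [] | reflexivity | | ].
      by rewrite H3; apply: cost3 HQ _ _ _; apply: HV.
    eapply stepsS; [by [] | reflexivity | | ].
      by rewrite /upd /= H3 H1; apply: cost3 HQ _ _ _; apply: HV.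
    apply: steps0.
  split => //; split; last by [].
  by move=> _; rewrite /upd /= H3 H1.
Qed.


Lemma stepsU Q pc m r v r' v' c pc'' m'' k :
  exec (nth IHalt prog pc) pc m = (pc.+1, upd m r v, c) -> r = r' -> v = v' ->
  (c <= Q)%N -> steps Q pc.+1 (upd m r' v') pc'' m'' k -> steps Q pc m pc'' m'' k.+1.
Proof.
move=> He er ev Hc H; subst r' v'.
have Hn : nth IHalt prog pc <> IHalt.
  by move=> Hh; move: He; rewrite Hh /= => -[h]; lia.
exact: stepsS Hn He Hc H.
Qed.

Lemma upd_eq (m : memory) r v : upd m r v r = v.
Proof. by rewrite /upd eqxx. Qed.
Lemma upd_neq (m : memory) r v a : a != r -> upd m r v a = m a.
Proof. by move=> h; rewrite /upd (negbTE h). Qed.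


Section Boot.
#[local] Opaque upd.
Variable W : seq int.
Let n := size W.
Hypothesis n1 : (0 < n)%N.
Let B := (16 * n)%N.
Variables (V BL Q : nat).
Hypothesis HQ : ((3*BL).+1 <= Q)%N.
Hypothesis HV : forall z : int, `|z| <= V%:Z -> (bitlen z <= BL)%N.
Hypothesis HBV : (B + 6 <= V)%N.
Hypothesis Hi : forall i, (0 < i)%N -> `|init_mem W i| <= V%:Z.

Lemma nB k i : (k < 16)%N -> (k != 16 * n + i)%N.
Proof. move=> h; apply/eqP; lia. Qed.
Lemma nBs k i : (k < 16)%N -> (16 * n + i != k)%N.
Proof. move=> h; apply/eqP; lia. Qed.
Ltac nq := first [ (apply: nB; done) | (apply: nBs; done) | (rewrite eqn_add2l; done) | done ].
Ltac lk := repeat (rewrite upd_eq || (rewrite upd_neq; [|nq])).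

Lemma init0 : init_mem W 0 = n%:Z.
Proof. by []. Qed.

Lemma bnat (x : nat) : (x <= B + 6)%N -> (bitlen x%:Z <= BL)%N.
Proof. move=> h; apply: HV; rewrite ger0_norm // lez_nat; lia. Qed.

Lemma boot : exists mb, steps Q 0 (init_mem W) 20 mb 20 /\
  mb 0%N = (B + 6)%N%:Z /\ mb 1%N = 1 /\ mb 2%N = 7%N%:Z /\ mb 3%N = 0 /\ mb 4%N = 0 /\
  (forall a, (7 <= a < B)%N -> mb a = init_mem W a) /\
  (forall i, (i < 6)%N -> mb (B + i)%N = init_mem W i.+1).
Proof.
have bI i : (0 < i)%N -> (bitlen (init_mem W i) <= BL)%N by move=> h; apply: HV; exact: Hi.
eexists; split.
eapply (stepsU _ _ _ _ _ _ ((2 * n)%N%:Z)); [reflexivity | by lk; rewrite ?addn0 | by lk; rewrite ?init0; first [done | lia] | by lk; rewrite ?init0 -?PoszD; apply: cost3 HQ _ _ _; first [apply: bnat; lia | apply: bI; lia] | ].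
eapply (stepsU _ _ _ _ _ _ ((4 * n)%N%:Z)); [reflexivity | by lk; rewrite ?addn0 | by lk; rewrite ?init0; first [done | lia] | by lk; rewrite ?init0 -?PoszD; apply: cost3 HQ _ _ _; first [apply: bnat; lia | apply: bI; lia] | ].
eapply (stepsU _ _ _ _ _ _ ((8 * n)%N%:Z)); [reflexivity | by lk; rewrite ?addn0 | by lk; rewrite ?init0; first [done | lia] | by lk; rewrite ?init0 -?PoszD; apply: cost3 HQ _ _ _; first [apply: bnat; lia | apply: bI; lia] | ].
eapply (stepsU _ _ _ _ _ _ ((16 * n)%N%:Z)); [reflexivity | by lk; rewrite ?addn0 | by lk; rewrite ?init0; first [done | lia] | by lk; rewrite ?init0 -?PoszD; apply: cost3 HQ _ _ _; first [apply: bnat; lia | apply: bI; lia] | ].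
eapply (stepsU _ _ _ _ _ (16 * n + 0)%N (init_mem W 1)); [reflexivity | by lk; rewrite ?addn0 | by lk; rewrite ?init0; first [done | lia] | by lk; rewrite ?init0 -?PoszD; apply: cost2 HQ _ _; first [apply: bnat; lia | apply: bI; lia] | ].
eapply (stepsU _ _ _ _ _ _ 1); [reflexivity | by [] | by [] | by apply: cost1 HQ _; apply: bnat; lia | ].
eapply (stepsU _ _ _ _ _ _ ((16 * n + 1)%N%:Z)); [reflexivity | by lk; rewrite ?addn0 | by lk; rewrite ?init0; first [done | lia] | by lk; rewrite ?init0 -?PoszD; apply: cost3 HQ _ _ _; first [apply: bnat; lia | apply: bI; lia] | ].
eapply (stepsU _ _ _ _ _ (16 * n + 1)%N (init_mem W 2)); [reflexivity | by lk; rewrite ?addn0 | by lk; rewrite ?init0; first [done | lia] | by lk; rewrite ?init0 -?PoszD; apply: cost2 HQ _ _; first [apply: bnat; lia | apply: bI; lia] | ].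
eapply (stepsU _ _ _ _ _ _ ((16 * n + 2)%N%:Z)); [reflexivity | by lk; rewrite ?addn0 | by lk; rewrite ?init0; first [done | lia] | by lk; rewrite ?init0 -?PoszD; apply: cost3 HQ _ _ _; first [apply: bnat; lia | apply: bI; lia] | ].
eapply (stepsU _ _ _ _ _ (16 * n + 2)%N (init_mem W 3)); [reflexivity | by lk; rewrite ?addn0 | by lk; rewrite ?init0; first [done | lia] | by lk; rewrite ?init0 -?PoszD; apply: cost2 HQ _ _; first [apply: bnat; lia | apply: bI; lia] | ].
eapply (stepsU _ _ _ _ _ _ ((16 * n + 3)%N%:Z)); [reflexivity | by lk; rewrite ?addn0 | by lk; rewrite ?init0; first [done | lia] | by lk; rewrite ?init0 -?PoszD; apply: cost3 HQ _ _ _; first [apply: bnat; lia | apply: bI; lia] | ].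
eapply (stepsU _ _ _ _ _ (16 * n + 3)%N (init_mem W 4)); [reflexivity | by lk; rewrite ?addn0 | by lk; rewrite ?init0; first [done | lia] | by lk; rewrite ?init0 -?PoszD; apply: cost2 HQ _ _; first [apply: bnat; lia | apply: bI; lia] | ].
eapply (stepsU _ _ _ _ _ _ ((16 * n + 4)%N%:Z)); [reflexivity | by lk; rewrite ?addn0 | by lk; rewrite ?init0; first [done | lia] | by lk; rewrite ?init0 -?PoszD; apply: cost3 HQ _ _ _; first [apply: bnat; lia | apply: bI; lia] | ].
eapply (stepsU _ _ _ _ _ (16 * n + 4)%N (init_mem W 5)); [reflexivity | by lk; rewrite ?addn0 | by lk; rewrite ?init0; first [done | lia] | by lk; rewrite ?init0 -?PoszD; apply: cost2 HQ _ _; first [apply: bnat; lia | apply: bI; lia] | ].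
eapply (stepsU _ _ _ _ _ _ ((16 * n + 5)%N%:Z)); [reflexivity | by lk; rewrite ?addn0 | by lk; rewrite ?init0; first [done | lia] | by lk; rewrite ?init0 -?PoszD; apply: cost3 HQ _ _ _; first [apply: bnat; lia | apply: bI; lia] | ].
eapply (stepsU _ _ _ _ _ (16 * n + 5)%N (init_mem W 6)); [reflexivity | by lk; rewrite ?addn0 | by lk; rewrite ?init0; first [done | lia] | by lk; rewrite ?init0 -?PoszD; apply: cost2 HQ _ _; first [apply: bnat; lia | apply: bI; lia] | ].
eapply (stepsU _ _ _ _ _ _ ((16 * n + 6)%N%:Z)); [reflexivity | by lk; rewrite ?addn0 | by lk; rewrite ?init0; first [done | lia] | by lk; rewrite ?init0 -?PoszD; apply: cost3 HQ _ _ _; first [apply: bnat; lia | apply: bI; lia] | ].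
eapply (stepsU _ _ _ _ _ _ 7); [reflexivity | by [] | by [] | by apply: cost1 HQ _; apply: bnat; lia | ].
eapply (stepsU _ _ _ _ _ _ 0); [reflexivity | by [] | by [] | by apply: cost1 HQ _; apply: bnat; lia | ].
eapply (stepsU _ _ _ _ _ _ 0); [reflexivity | by [] | by [] | by apply: cost1 HQ _; apply: bnat; lia | ].
apply: steps0.
do 5!(split; first by lk).
split.
  move=> a /andP[a7 aB].
  by repeat (rewrite upd_eq || (rewrite upd_neq; [|apply/eqP; lia])).
by case=> [|[|[|[|[|[|//]]]]]] _; rewrite /B; lk.
Qed.
End Boot.

Lemma init_succ (W : seq int) i : init_mem W i.+1 = nth 0 W i.
Proof.
rewrite /init_mem /=; case: ifP => // /negbT; rewrite -ltnNge => h.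
by rewrite nth_default //; lia.
Qed.

Lemma sum_mb (W : seq int) (mb : memory) (f : int -> int) : f 0 = 0 -> (0 < size W)%N ->
  (forall a, (7 <= a < 16 * size W)%N -> mb a = init_mem W a) ->
  (forall i, (i < 6)%N -> mb (16 * size W + i)%N = init_mem W i.+1) ->
  \sum_(7 <= a < 16 * size W + 6) f (mb a) = \sum_(w <- W) f w.
Proof.
move=> f0 n1 Hlo Hhi.
set n := size W in n1 Hlo Hhi *.
have h1 : (7 <= 16 * n)%N by lia.
have h2 : (16 * n <= 16 * n + 6)%N by lia.
rewrite (big_cat_nat h1 h2) /=.
have -> : \sum_(16 * n <= a < 16 * n + 6) f (mb a) = \sum_(1 <= a < 7) f (init_mem W a).
  rewrite (big_addn 0 (16 * n + 6) (16 * n) xpredT) (big_addn 0 7 1 xpredT) addKn /=.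
  apply: eq_big_nat => i hi; rewrite addn1 -Hhi; last by lia.
  by rewrite addnC.
have -> : \sum_(7 <= a < 16 * n) f (mb a) = \sum_(7 <= a < 16 * n) f (init_mem W a).
  by apply: eq_big_nat => a ha; rewrite Hlo.
have h3 : (1 <= 7)%N by [].
rewrite addrC -(big_cat_nat h3 h1) /= (big_addn 0 (16 * n) 1 xpredT).
under eq_bigr => i _ do rewrite addn1 init_succ.
have h4 : (n <= 16 * n - 1)%N by lia.
have h5 : (0 <= n)%N by [].
rewrite (big_cat_nat h5 h4) /=.
have -> : \sum_(n <= i < 16 * n - 1) f (nth 0 W i) = 0.
  rewrite big_nat_cond big1 // => i /andP[/andP[hi _] _]; by rewrite nth_default.
by rewrite addr0 [RHS](big_nth 0).
Qed.

Lemma norm_le_sum (W : seq int) x : x \in W -> `|x| <= \sum_(w <- W) `|w|.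
Proof.
elim: W => //= w W IH; rewrite in_cons big_cons => /orP [/eqP <-|xW].
  by rewrite lerDl; apply: sumr_ge0.
by apply: le_trans (IH xW) _; rewrite lerDr.
Qed.

Lemma init_bound (W : seq int) i : (0 < i)%N -> `|init_mem W i| <= \sum_(w <- W) `|w|.
Proof.
case: i => // k _; rewrite init_succ.
case: (ltnP k (size W)) => h; first by apply: norm_le_sum; exact: mem_nth.
by rewrite nth_default // normr0; apply: sumr_ge0.
Qed.

Lemma sum_norm_nat (W : seq int) : \sum_(w <- W) `|w| = (\sum_(w <- W) `|w|%N)%N%:Z.
Proof.
elim: W => [|w W IH]; first by rewrite !big_nil.
by rewrite !big_cons PoszD IH abszE.
Qed.

Lemma size_le_input (W : seq int) : (size W <= input_size W)%N.
Proof.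
rewrite /input_size; elim: W => [|w W IH]; first by rewrite big_nil.
by rewrite big_cons /=; lia.
Qed.

Lemma abs_lt_bitlen (w : int) : (`|w|%N < 2 ^ bitlen w)%N.
Proof. exact: trunc_log_ltn. Qed.

Lemma sum_abs_lt (W : seq int) : (\sum_(w <- W) `|w|%N < 2 ^ input_size W)%N.
Proof.
rewrite /input_size; elim: W => [|w W IH]; first by rewrite !big_nil.
rewrite !big_cons expnD expnS.
have h := abs_lt_bitlen w.
have p1 : (0 < 2 ^ bitlen w)%N by rewrite expn_gt0.
have p2 : (0 < 2 ^ (\sum_(j <- W) (bitlen j).+1))%N by rewrite expn_gt0.
nia.
Qed.

Lemma bitlen_le (z : int) b : (0 < b)%N -> (`|z|%N < 2 ^ b)%N -> (bitlen z <= b)%N.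
Proof.
move=> b0 h; rewrite /bitlen.
case: (posnP `|z|%N) => [->|hz].
  by case: b b0 h.
rewrite ltnNge; apply/negP => hb.
have := trunc_logP (isT : (1 < 2)%N) hz.
have : (2 ^ b <= 2 ^ trunc_log 2 `|z|)%N by apply: leq_pexp2l.
lia.
Qed.

Theorem proposition11 :
  exists (P : seq instr) (k c : nat),
  forall W : seq int,
    uniq W -> W != [::] -> gcd_seq W = 1 ->
    exists (fuel : nat) (m : memory) (t : nat),
      run P fuel 0 (init_mem W) = Some (m, t) /\
      (t <= k * (input_size W).+1 ^ c)%N /\
      reachable W (m 0%N) /\ reachable W (m 1%N) /\
      gcdz (m 0%N) (m 1%N) = 1.
Proof.
exists prog, 5000%N, 2%N => W uW Wn g1.
have n1 : (0 < size W)%N by case: W Wn uW g1.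
set n := size W in n1 *.
set s := input_size W.
set TN := (\sum_(w <- W) `|w|%N)%N.
set E := (16 * n + 6)%N.
set V := ((E + TN) * (E + TN) + 1)%N.
set BL := (2 * s + 11)%N.
set Q := (3 * BL).+1.
have HQ : ((3 * BL).+1 <= Q)%N by [].
have ns : (n <= s)%N by apply: size_le_input.
have TNs : (TN < 2 ^ s)%N by apply: sum_abs_lt.
have ss : (s < 2 ^ s)%N by apply: ltn_expl.
have VBL : (V < 2 ^ BL)%N.
  have -> : (2 ^ BL = 2 ^ s * 2 ^ s * 2048)%N by rewrite /BL expnD mul2n -addnn expnD.
  set X := (2 ^ s)%N in TNs ss *.
  have h : (E + TN <= 17 * X)%N by rewrite /E; lia.
  have := leq_mul h h; rewrite /V; nia.
have HV : forall z : int, `|z| <= V%:Z -> (bitlen z <= BL)%N.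
  move=> z hz; apply: bitlen_le; first by rewrite /BL; lia.
  by apply: leq_ltn_trans VBL; rewrite -lez_nat abszE.
have HBV : (16 * n + 6 <= V)%N by rewrite /V -/E; nia.
have Tsum : \sum_(w <- W) `|w| = TN%:Z by rewrite sum_norm_nat.
have Hi : forall i, (0 < i)%N -> `|init_mem W i| <= V%:Z.
  move=> i hi; apply: le_trans (init_bound W i hi) _; rewrite Tsum lez_nat /V; nia.
have [mb [Sb [M0 [M1 [M2 [M3 [M4 [Hlo Hhi]]]]]]]] := boot W n1 V BL Q HQ HV HBV Hi.
have sumf (f : int -> int) : f 0 = 0 -> \sum_(7 <= a < E) f (mb a) = \sum_(w <- W) f w.
  by move=> f0; exact: (sum_mb W mb f f0 n1 Hlo Hhi).
have HB : \sum_(7 <= a < E) `|mb a| + E%:Z <= V%:Z.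
  rewrite (sumf (fun x => `|x|)) ?normr0 // Tsum -PoszD lez_nat /V; nia.
have HV2 : (\sum_(7 <= a < E) `|mb a|) * (\sum_(7 <= a < E) `|mb a|) + 1 <= V%:Z.
  rewrite (sumf (fun x => `|x|)) ?normr0 // Tsum -PoszM -PoszD lez_nat /V; nia.
have I0 : Inv mb E mb 7.
  by rewrite /Inv M0 M1 M2 M3 M4 !big_geq.
have E7 : (7 <= E)%N by rewrite /E; lia.
have h77 : (7 <= 7 <= E)%N by rewrite E7.
have [m1 [k1 [S1 [K1 I1]]]] := loop mb E V BL Q HQ HV HB (E - 7) 7 mb (erefl _) h77 I0.
have [pcH [mf [k2 [S2 [K2 [Hh [Hpos Hneg]]]]]]] := exitp mb E V BL Q m1 HQ HV E7 HV2 I1.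
have Sall := steps_trans _ _ _ _ _ _ _ _ _ (steps_trans _ _ _ _ _ _ _ _ _ Sb S1) S2.
have [t [Ht Htk]] := run_steps _ _ _ _ _ _ Sall Hh.
exists (20 + k1 + k2).+1, mf, t; split; first exact: Ht.
split.
  apply: leq_trans Htk _; rewrite /Q /BL /E in K1 *.
  have h1 : (20 + k1 + k2 <= 144 * s + 18)%N by lia.
  have := leq_mul h1 (leqnn (3 * (2 * s + 11)).+1); nia.
rewrite (sumf posp) in Hpos Hneg; last by [].
rewrite (sumf id) in Hneg; last by [].
case: (ltrP 0 (\sum_(w <- W) posp w)) => hP.
  have [e0 e1] := Hpos hP; rewrite e0 e1.
  have [r0 r1] := key_pos W uW g1 hP.
  split; first exact: r0.
  split; first exact: r1.
  by rewrite gcdzDl gcdz1.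
have [e0 e1] := Hneg hP; rewrite e0 e1.
have [r0 r1] := key_neg W uW g1 hP.
split; first exact: r0.
split; first exact: r1.
by rewrite gcdzDl gcdzN gcdz1.
Qed.
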